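(* In the setting described in the context, assume (B), (B1) and (B2). Then the map $\epsilon\mapsto L_{\mathbb P_\epsilon}h_0$ is differentiable at $\epsilon=0$ as a $C^1(X)$-valued map.
   Context: $X$ is a compact interval with normalized Lebesgue measure $m$; $\Omega$ a measurable space; for each $\omega$, $T_\omega\colon X\to X$ has a finite or countable family of branches indexed by a common set $Z$ on open intervals partitioning $X$ mod $0$, each $C^3$ and onto $X$, with inverse branches $g_{z,\omega}$. $\{\mathbb P_\epsilon\}_{\epsilon\in V}$ are probability measures on $\Omega$, $V$ a neighbourhood of $0$; $L_{\mathbb P_\epsilon}\Phi=\int_\Omega\sum_z\Phi\circ g_{z,\omega}|g'_{z,\omega}|\,d\mathbb P_\epsilon(\omega)$. For $\Phi\in L^1(X)$, $\psi_z(\epsilon,x)=\int_\Omega[\Phi\circ g_{z,\omega}|g'_{z,\omega}|](x)\,d\mathbb P_\epsilon(\omega)$, $\psi^{(0)}_z=\psi_z$, $\psi^{(1)}_z=\partial_x\psi_z$. (B): $L_{\mathbb P_\epsilon}$ has a uniform spectral gap on $C^1$ (there are $\theta\in(0,1)$, $C>0$ independent of $\epsilon$ with $\|L^n_{\mathbb P_\epsilon}\phi\|_{C^1}\le C\theta^n\|\phi\|_{C^1}$ for zero-average $\phi$), and the system has a unique stationary density $h_\epsilon\in C^2$ (i.e. $L_{\mathbb P_\epsilon}h_\epsilon=h_\epsilon$, $h_\epsilon\ge0$, $\int h_\epsilon dm=1$). (B1): for $\Phi=h_0$, $\partial_\epsilon\psi_z,\partial_x\psi_z,\partial_x\partial_\epsilon\psi_z,\partial_\epsilon\partial_x\psi_z$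 exist and are jointly continuous on $V\times X$, and $\sum_z\sup_{\epsilon\in V}\sup_{x}|\partial_\epsilon\psi^{(i)}_z(\epsilon,x)|<\infty$ for $i=0,1$. (B2): for every $\Phi\in C^1$, $\psi_z$ and $\partial_x\psi_z$ exist and are jointly continuous, and $\sum_z\sup_{\epsilon}\sup_x|\psi^{(i)}_z(\epsilon,x)|<\infty$ for $i=0,1$. *)

(* Defs.v *)
From HB Require Import structures.
From mathcomp Require Import all_boot all_order all_algebra.
From mathcomp Require Import all_classical all_reals all_analysis.
Set Implicit Arguments. Unset Strict Implicit. Unset Printing Implicit Defensive.
Import Order.TTheory GRing.Theory Num.Theory.
Import numFieldNormedType.Exports.
Local Open Scope classical_set_scope.
Local Open Scope ring_scope.

Section Defs.
Variable R : realType.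

Definition Ck_fam (D : set R) (k : nat) (fs : nat -> R -> R) : Prop :=
  (forall i, (i <= k)%N -> {within D, continuous (fs i)}) /\
  (forall i, (i < k)%N -> forall x, D° x -> is_derive x 1 (fs i) (fs i.+1 x)).

(** f is of class C^k on D (for D = [a,b]: C^k up to the boundary). *)
Definition Ck_on (D : set R) (k : nat) (f : R -> R) : Prop :=
  exists fs : nat -> R -> R, fs 0%N = f /\ Ck_fam D k fs.

Definition C1norm (a b : R) (f : R -> R) : R :=
  sup [set `|f x| | x in `[a, b]] + sup [set `|derive1 f x| | x in `]a, b[].

(** Sum over the (finite or countable) index set Z, taken as a subset of nat. *)
Definition sumZ (Z : set nat) (u : nat -> R) : R :=
  limn (series (fun n => if n \in Z then u n else 0)).

Definition summableZ (Z : set nat) (u : nat -> R) : Prop :=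
  cvgn (series (fun n => if n \in Z then u n else 0)).

Context {d : measure_display} {Omega : measurableType d}.

(** Transfer operator L_P Phi (x) = int_Omega sum_z Phi(g_{z,w} x) |g'_{z,w}(x)| dP(w),
    where [g1 z w] is the derivative of the inverse branch [g z w]. *)
Definition Lop (P : probability Omega R) (Z : set nat)
    (g g1 : nat -> Omega -> R -> R) (Phi : R -> R) (x : R) : R :=
  \int[P]_(w in setT) sumZ Z (fun z => Phi (g z w x) * `|g1 z w x|).

Definition psi (P : R -> probability Omega R)
    (g g1 : nat -> Omega -> R -> R) (Phi : R -> R) (z : nat) (e x : R) : R :=
  \int[P e]_(w in setT) (Phi (g z w x) * `|g1 z w x|).

End Defs.

(* Main.v *)
Require Import Defs.
From HB Require Import structures.
From mathcomp Require Import all_boot all_order all_algebra.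
From mathcomp Require Import all_classical all_reals all_analysis.
From mathcomp Require Import measurable_realfun.
From mathcomp Require Import ring.
Import Order.TTheory GRing.Theory Num.Theory.
Import numFieldNormedType.Exports.
Local Open Scope classical_set_scope.
Local Open Scope ring_scope.

Set Implicit Arguments. Unset Strict Implicit.

Section H1.
Variable R : realType.

Definition mk (Z : set nat) (u : nat -> R) n := if n \in Z then u n else 0.

Lemma sumZE Z u : sumZ Z u = limn (series (mk Z u)).
Proof. by []. Qed.

Lemma lim_ncvg (u : nat -> R) : ~ cvgn u -> limn u = 0.
Proof. move=> h; rewrite /lim /lim_in /xget; case: pselect => [e|//]; exfalso; apply: h; case: e => l /asboolP hl.
apply/cvg_ex; by exists l. Qed.

Lemma series_cmp (u v : nat -> R) : (forall n, `|u n| <= v n) -> cvgn (series v) ->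
  cvgn (series u).
Proof.
move=> uv cv; apply: normed_cvg.
apply: (series_le_cvg _ _ _ cv).
- by move=> n; exact: normr_ge0.
- by move=> n; exact: le_trans (normr_ge0 _) (uv n).
- by move=> n; exact: uv.
Qed.

Arguments series_cmp {u v}.

Lemma mtest Z (u M : nat -> R) : (forall z, Z z -> `|u z| <= M z) -> summableZ Z M ->
  cvgn (series (mk Z u)).
Proof.
move=> uM sM; apply: (@series_cmp _ (mk Z M)) => // n; rewrite /mk.
by case: ifPn => [/set_mem Zn|_]; [exact: uM|rewrite normr0].
Qed.

Lemma tail_bound (u v : nat -> R) N : (forall n, `|u n| <= v n) -> cvgn (series v) ->
  `|limn (series u) - series u N| <= limn (series v) - series v N.
Proof.
move=> uv cv; have cu := series_cmp uv cv.
have cu' : cvgn (fun n => `|series u n - series u N|).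
  by apply/cvg_ex; eexists; apply: cvg_norm; apply: cvgB; [exact: cu|exact: cvg_cst].
have cv' : cvgn (fun n => series v n - series v N).
  by apply/cvg_ex; eexists; apply: cvgB; [exact: cv|exact: cvg_cst].
have -> : `|limn (series u) - series u N| = limn (fun n => `|series u n - series u N|).
  apply/esym/cvg_lim => //; apply: cvg_norm; apply: cvgB; [exact: cu|exact: cvg_cst].
have -> : limn (series v) - series v N = limn (fun n => series v n - series v N).
  apply/esym/cvg_lim => //; apply: cvgB; [exact: cv|exact: cvg_cst].
apply: ler_lim => //; near=> n.
have hn : (N <= n)%N by near: n; exists N.
rewrite !sub_series_geq //.
apply: le_trans (ler_norm_sum _ _ _) _.
by apply: ler_sum => i _.
Unshelve. all: by end_near.
Qed.


Lemma sumZ_lin Z (u v w : nat -> R) t :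
  cvgn (series (mk Z u)) -> cvgn (series (mk Z v)) -> cvgn (series (mk Z w)) ->
  sumZ Z (fun z => (u z - v z) / t - w z) = (sumZ Z u - sumZ Z v) / t - sumZ Z w.
Proof.
move=> cu cv cw; rewrite !sumZE.
have -> : series (mk Z (fun z => (u z - v z) / t - w z)) =
    (fun N => (series (mk Z u) N - series (mk Z v) N) / t - series (mk Z w) N).
  apply/funext => N; rewrite /series /= -!sumrB mulr_suml -sumrB.
  by apply: eq_bigr => i _; rewrite /mk; case: ifPn => _ //; rewrite !subr0 ?mul0r ?subr0.
apply: cvg_lim => //; apply: cvgB; last exact: cw.
by apply: cvgMl; apply: cvgB; [exact: cu|exact: cv].
Qed.

Lemma lim_fin (w : nat -> R) N : (forall n, (N <= n)%N -> w n = 0) ->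
  limn (series w) = series w N.
Proof.
move=> w0; apply: norm_lim_near_cst; near=> n.
have hn : (N <= n)%N by near: n; exists N.
apply/eqP; rewrite -subr_eq0 sub_series_geq //; apply/eqP/big1_seq => i.
move=> /andP[_]; rewrite mem_index_iota => /andP[hi _]; exact: w0.
Unshelve. all: by end_near.
Qed.

Lemma tannery (S X : Type) (F : set_system S) {PF : ProperFilter F} (A : set X) Z
  (q : S -> nat -> X -> R) (M : nat -> R) :
  summableZ Z M -> (forall z, Z z -> 0 <= M z) ->
  (\forall s \near F, forall z x, Z z -> A x -> `|q s z x| <= M z) ->
  (forall z, Z z -> forall e, 0 < e -> \forall s \near F, forall x, A x -> `|q s z x| <= e) ->
  forall e, 0 < e -> \forall s \near F, forall x, A x -> `|sumZ Z (fun z => q s z x)| <= e.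
Proof.
move=> sM M0 h1 h2 e e0.
have cM : series (mk Z M) n @[n --> \oo] --> limn (series (mk Z M)) by [].
have [N hN] : exists N, limn (series (mk Z M)) - series (mk Z M) N <= e / 2.
  have /cvgr_dist_le /(_ (e / 2)) := cM.
  move=> /(_ ltac:(by rewrite divr_gt0)) [N _ hN]; exists N.
  by apply: le_trans (ler_norm _) (hN N (leqnn N)).
pose e' := e / 2 / N.+1%:R.
have e'0 : 0 < e' by rewrite /e' !divr_gt0.
have h3 : \forall s \near F, forall i : 'I_N, forall x, A x -> `|mk Z (fun z => q s z x) i| <= e'.
  apply: filter_forall => i; rewrite /mk; case: (boolP (nat_of_ord i \in Z)) => [/set_mem Zi|_].
    exact: h2.
  by apply: nearW => s x _; rewrite normr0 ltW.
near=> s.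
move=> x Ax.
have hs1 := (near h1 s); have hs3 := (near h3 s).
have uv : forall n, `|mk Z (fun z => q s z x) n| <= mk Z M n.
  move=> n; rewrite /mk; case: ifPn => [/set_mem Zn|_]; first exact: hs1.
  by rewrite normr0.
rewrite sumZE.
have := tail_bound N uv sM.
move=> tb.
rewrite -(subrK (series (mk Z (fun z => q s z x)) N) (limn _)).
apply: le_trans (ler_normD _ _) _.
rewrite (splitr e) addrC; apply: lerD; last exact: le_trans tb hN.
rewrite /series /=; apply: le_trans (ler_norm_sum _ _ _) _.
apply: le_trans (_ : \sum_(0 <= k < N) e' <= _).
  rewrite big_mkord; apply: (@le_trans _ _ (\sum_(k < N) e')).
    by rewrite -(big_mkord xpredT (fun k => `|mk Z (fun z => q s z x) k|)) big_mkord; apply: ler_sum => i _; exact: hs3.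
  by rewrite big_mkord.
rewrite sumr_const_nat subn0 /e'.
rewrite -[_ *+ N]mulr_natr mulrAC ler_pdivrMr ?ltr0n //.
by rewrite ler_wpM2l ?ler_nat // ltW // divr_gt0.
Unshelve. all: by end_near.
Qed.

End H1.

Section H2.
Variable R : realType.

Lemma within_near {T : topologicalType} (A : set T) (f : T -> R) x :
  {within A, continuous f} -> A x ->
  forall e, 0 < e -> \forall y \near x, A y -> `|f y - f x| <= e.
Proof.
move=> cf Ax e e0; have := cf x.
move/cvgr_dist_le/(_ e e0) => /(nbhs_subspace_ex _ Ax) [W nW eq].
apply: filterS nW => y Wy Ay.
have : (W `&` A) y by [].
rewrite -eq => -[h _]; by rewrite distrC; exact: h.
Qed.

Arguments within_near {T A f x}.

Lemma near_within {T : topologicalType} (A : set T) (f : T -> R) :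
  (forall x, A x -> forall e, 0 < e -> \forall y \near x, A y -> `|f y - f x| <= e) ->
  {within A, continuous f}.
Proof.
move=> h; rewrite continuous_subspace_in => x /set_mem Ax.
apply/cvgrPdist_le => e e0.
apply/(nbhs_subspace_ex _ Ax); exists [set y | A y -> `|f y - f x| <= e]; first exact: h.
apply/seteqP; split => y [hy Ay]; split => //; last by rewrite distrC; exact: hy.
by move=> _; rewrite distrC; exact: hy.
Qed.

Lemma unif_cont (V I : set R) (f : R -> R -> R) :
  open V -> V 0 -> compact I ->
  {within V `*` I, continuous (fun p => f p.1 p.2)} ->
  forall e, 0 < e -> \forall s \near 0, forall x, I x -> `|f s x - f 0 x| <= e.
Proof.
move=> oV V0 cI cf e e0.
have /compact_near_coveringP cov := cI.
pose P (s : R) (x : R) := I x -> `|f s x - f 0 x| <= e.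
suff : \forall s \near 0, I `<=` P s.
  by move=> H; apply: filterS H => s h y Iy; exact: (h y Iy Iy).
apply: (cov R (nbhs (0:R)) P _) => x Ix.
have := within_near cf (_ : (V `*` I) (0, x)) (e / 2) _.
move=> /(_ (conj V0 Ix)) /(_ ltac:(by rewrite divr_gt0)).
case=> -[A1 B1] /= [nA1 nB1] sub.
exists (B1, A1 `&` V) => /=; first split => //.
  by apply: filterI => //; exact: open_nbhs_nbhs.
case=> x' s /= [B1x' [A1s Vs]] Ix'.
have h1 := sub (s, x') (conj A1s B1x') (conj Vs Ix').
have h2 := sub (0, x') (conj (nbhs_singleton nA1) B1x') (conj V0 Ix').
rewrite /= in h1 h2.
rewrite -(subrK (f 0 x) (f s x')) -addrA.
apply: le_trans (ler_normD _ _) _.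
by rewrite (splitr e) lerD // distrC.
Qed.

End H2.

Section H3.
Variable R : realType.

Lemma open_ball_in (U : set R) u : open U -> U u ->
  exists2 r, 0 < r & forall y, `|y - u| < r -> U y.
Proof.
move=> oU Uu; have : nbhs u U by apply: open_nbhs_nbhs; split.
move=> /nbhs_ballP[r r0 hr]; exists r => // y hy; apply: hr.
by rewrite /ball /= distrC.
Qed.

Lemma mvt_sym (f df : R -> R) (U : set R) u v : u != v ->
  (forall y, `|y - u| <= `|v - u| -> U y) ->
  (forall y, U y -> is_derive y 1 f (df y)) ->
  exists c, `|c - u| <= `|v - u| /\ f v - f u = df c * (v - u).
Proof.
move=> uv hU hd.
have dv : forall y, U y -> derivable f y 1 by move=> y /hd [].
case: (ltgtP u v) uv => // huv _.
- have := @MVT R f df u v huv _ _.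
  case.
  + move=> y; rewrite in_itv /= => /andP[h1 h2]; apply: hd; apply: hU.
    by rewrite !gtr0_norm ?subr_gt0 // lerD2r ltW.
  + apply: derivable_within_continuous => y; rewrite in_itv /= => /andP[h1 h2].
    apply: dv; apply: hU.
    by rewrite !ger0_norm ?subr_ge0 // ?lerD2r // ltW.
  move=> c; rewrite in_itv /= => /andP[h1 h2] E; exists c; split => //.
  by rewrite !gtr0_norm ?subr_gt0 // lerD2r ltW.
- have := @MVT R f df v u huv _ _.
  case.
  + move=> y; rewrite in_itv /= => /andP[h1 h2]; apply: hd; apply: hU.
    by rewrite !ltr0_norm ?subr_lt0 // lerN2 lerD2r ltW.
  + apply: derivable_within_continuous => y; rewrite in_itv /= => /andP[h1 h2].
    apply: dv; apply: hU.
    by rewrite (ler0_norm (x := y - u)) ?subr_le0 // ltr0_norm ?subr_lt0 // lerN2 lerD2r.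
  move=> c; rewrite in_itv /= => /andP[h1 h2] E; exists c; split.
    by rewrite !ltr0_norm ?subr_lt0 // lerN2 lerD2r ltW.
  by rewrite -opprB E -mulrN opprB.
Qed.

Lemma is_derive_quot (f : R -> R) (x df : R) : is_derive x 1 f df ->
  (fun h => (f (h + x) - f x) / h) @ 0^' --> df.
Proof.
case=> dH dv.
have E : (fun h => (f (h + x) - f x) / h) = (fun h => h^-1 *: ((f \o shift x) (h *: 1) - f x)).
  by apply/funext => h /=; rewrite /shift scaler1 mulrC.
rewrite E -dv; exact: dH.
Qed.

Lemma quot_is_derive (f : R -> R) (x df : R) :
  (fun h => (f (h + x) - f x) / h) @ 0^' --> df -> is_derive x 1 f df.
Proof.
move=> H.
have E : (fun h => (f (h + x) - f x) / h) = (fun h => h^-1 *: ((f \o shift x) (h *: 1) - f x)).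
  by apply/funext => h /=; rewrite /shift scaler1 mulrC.
rewrite E in H.
apply: DeriveDef; first by apply/cvg_ex; exists df.
by apply: cvg_lim.
Qed.

Lemma near0' (r : R) : 0 < r -> \forall h \near (0:R)^', h != 0 /\ `|h| < r.
Proof.
move=> r0; have := @nbhs0_lt R R^o r r0; rewrite /within /=.
by apply: filterS => h hr h0; split.
Qed.

Lemma summable2 Z (M : nat -> R) : summableZ Z M -> summableZ Z (fun z => M z + M z).
Proof.
move=> sM; rewrite /summableZ.
have -> : (fun n => if n \in Z then M n + M n else 0) = mk Z M + mk Z M.
  by apply/funext => n; rewrite fctE /mk; case: ifPn => _ //; rewrite addr0.
exact: is_cvg_seriesD.
Qed.

Lemma der_sum Z (phi psi : nat -> R -> R) (M0 M1 : nat -> R) (a b x : R) :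
  summableZ Z M0 -> summableZ Z M1 ->
  (forall z y, Z z -> `[a, b]%classic y -> `|phi z y| <= M0 z) ->
  (forall z y, Z z -> `]a, b[%classic y -> is_derive y 1 (phi z) (psi z y)) ->
  (forall z y, Z z -> `]a, b[%classic y -> `|psi z y| <= M1 z) ->
  `]a, b[%classic x -> is_derive x 1 (fun y => sumZ Z (fun z => phi z y)) (sumZ Z (fun z => psi z x)).
Proof.
move=> sM0 sM1 b0 hd b1 Ix.
have [r r0 hr] := open_ball_in (@itv_open _ _ a b) Ix.
have Isub : `]a, b[ `<=` `[a, b] by apply: subset_itvW.
have M10 : forall z, Z z -> 0 <= M1 z + M1 z.
  by move=> z Zz; apply: addr_ge0; apply: le_trans (b1 z x Zz Ix).
have h1 : \forall h \near (0:R)^', forall z (u : unit), Z z -> [set: unit] u ->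
    `|(phi z (h + x) - phi z x) / h - psi z x| <= M1 z + M1 z.
  have := near0' r0; apply: filterS => h [h0 hrh] z _ Zz _.
  have hxx : x != h + x by rewrite eq_sym -subr_eq0 addrK.
  have hU : forall y, `|y - x| <= `|(h + x) - x| -> `]a, b[%classic y.
    by move=> y; rewrite addrK => hy; apply: hr; exact: le_lt_trans hy hrh.
  have hD : forall y, `]a, b[%classic y -> is_derive y 1 (phi z) (psi z y).
    by move=> y hy; apply: hd.
  have [c [hc E]] := mvt_sym hxx hU hD.
  rewrite E addrK mulfK //.
  apply: le_trans (ler_normB _ _) _.
  apply: lerD; apply: b1 => //; apply: hr; rewrite addrK in hc; exact: le_lt_trans hc hrh.
have h2 : forall z, Z z -> forall e1, 0 < e1 -> \forall h \near (0:R)^', forall u : unit,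
    [set: unit] u -> `|(phi z (h + x) - phi z x) / h - psi z x| <= e1.
  move=> z Zz e1 e10; have := is_derive_quot (hd z x Zz Ix).
  move=> /cvgr_dist_le /(_ e1 e10); apply: filterS => h hh _ _.
  by rewrite distrC.
apply: quot_is_derive; apply/cvgrPdist_le => e e0.
have T := tannery (summable2 sM1) M10 h1 h2 e0.
near=> h.
have [h0 hrh] : h != 0 /\ `|h| < r by near: h; exact: near0' r0.
have T2 : forall u : unit, [set: unit] u ->
    `|sumZ Z (fun z => (phi z (h + x) - phi z x) / h - psi z x)| <= e.
  by near: h; exact: T.
have Ihx : `]a, b[%classic (h + x) by apply: hr; rewrite addrK.
have := T2 tt I; rewrite sumZ_lin.
- by rewrite distrC.
- by apply: (mtest (M := M0)) => // z Zz; apply: b0 => //; exact: Isub.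
- by apply: (mtest (M := M0)) => // z Zz; apply: b0 => //; exact: Isub.
- by apply: (mtest (M := M1)) => // z Zz; apply: b1.
Unshelve. all: by end_near.
Qed.

End H3.

Section H4.
Variable R : realType.

Lemma cont_sum Z (u : nat -> R -> R) (M : nat -> R) (I : set R) :
  summableZ Z M -> (forall z, Z z -> 0 <= M z) ->
  (forall z y, Z z -> I y -> `|u z y| <= M z) ->
  (forall z, Z z -> {within I, continuous (u z)}) ->
  {within I, continuous (fun y => sumZ Z (fun z => u z y))}.
Proof.
move=> sM M0 bu cu; apply: near_within => x Ix e e0.
pose q (y : R) z (_ : unit) := if `[< I y >] then (u z y - u z x) / 1 - 0 else 0.
have h1 : \forall y \near x, forall z (t : unit), Z z -> [set: unit] t -> `|q y z t| <= M z + M z.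
  near=> y; move=> z t Zz _; rewrite /q; case: asboolP => Iy.
    by rewrite divr1 subr0; apply: le_trans (ler_normB _ _) _; apply: lerD; apply: bu.
  by rewrite normr0 addr_ge0 ?M0.
have h2 : forall z, Z z -> forall e1, 0 < e1 -> \forall y \near x, forall t : unit,
    [set: unit] t -> `|q y z t| <= e1.
  move=> z Zz e1 e10; have := within_near (cu z Zz) Ix e10.
  apply: filterS => y hy t _; rewrite /q; case: asboolP => Iy.
    by rewrite divr1 subr0; exact: hy.
  by rewrite normr0 ltW.
have T := tannery (PF := nbhs_pfilter x) (summable2 sM) (fun z Zz => addr_ge0 (M0 z Zz) (M0 z Zz)) h1 h2 e0.
apply: filterS T => y T Iy.
have := T tt Logic.I; rewrite /q.
have -> : (fun z => if `[< I y >] then (u z y - u z x) / 1 - 0 else 0) =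
    (fun z => (u z y - u z x) / 1 - 0) by apply/funext => z; rewrite (asboolT Iy).
have S0 : sumZ Z (fun=> 0 : R) = 0.
  rewrite sumZE (_ : series _ = fun=> 0); first exact: lim_cst.
  by apply/funext => n; rewrite /series /=; apply: big1 => i _; rewrite /mk; case: ifP.
rewrite sumZ_lin ?divr1 ?S0 ?subr0 //.
- exact: (mtest (M := M) (fun z Zz => bu z y Zz Iy) sM).
- exact: (mtest (M := M) (fun z Zz => bu z x Zz Ix) sM).
- by apply: (mtest (M := M) _ sM) => z Zz; rewrite normr0 M0.
Unshelve. all: by end_near.
Qed.

Lemma mvt_pos (f df : R -> R) (U : set R) u v : u < v -> `[u, v]%classic `<=` U ->
  (forall y, U y -> is_derive y 1 f (df y)) ->
  exists2 c, `]u, v[%classic c & f v - f u = df c * (v - u).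
Proof.
move=> uv sU hd.
have := @MVT R f df u v uv _ _; case.
- move=> y; rewrite in_itv /= => /andP[h1 h2]; apply: hd; apply: sU.
  by rewrite /= in_itv /= !ltW.
- apply: derivable_within_continuous => y; rewrite in_itv /= => /andP[h1 h2].
  have : `[u, v]%classic y by suff : y \in `[u, v] by []; rewrite in_itv /= h1 h2.
  by move=> /sU /hd [].
- move=> c hc E; exists c => //.
Qed.

Lemma schwarz (V : set R) (a b : R) (p dE dX dXE dEX : R -> R -> R) x :
  open V -> V 0 -> `]a, b[%classic x ->
  (forall e y, V e -> `[a, b]%classic y -> is_derive e 1 (fun e' => p e' y) (dE e y)) ->
  (forall e y, V e -> `]a, b[%classic y -> is_derive y 1 (p e) (dX e y)) ->
  (forall e y, V e -> `]a, b[%classic y -> is_derive y 1 (dE e) (dXE e y)) ->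
  (forall e y, V e -> `[a, b]%classic y -> is_derive e 1 (fun e' => dX e' y) (dEX e y)) ->
  {within V `*` `[a, b]%classic, continuous (fun q => dXE q.1 q.2)} ->
  {within V `*` `[a, b]%classic, continuous (fun q => dEX q.1 q.2)} ->
  dXE 0 x = dEX 0 x.
Proof.
move=> oV V0 Ix hE hX hXE hEX cXE cEX.
have Isub : `]a, b[%classic `<=` `[a, b]%classic by apply: subset_itvW.
apply/eqP; rewrite -subr_eq0 -normr_le0; apply/ler_addgt0Pr => e e0; rewrite add0r.
have VI : (V `*` `[a, b]%classic) (0, x) by split => //; exact: Isub.
have e20 : 0 < e / 2 by rewrite divr_gt0.
have n1 := within_near cXE VI e20; have n2 := within_near cEX VI e20.
have [r0 r00 hr0] := (nbhs_ballP _ _).1 (filterI n1 n2).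
have [r1 r10 hr1] := open_ball_in oV V0.
have [r2 r20 hr2] := open_ball_in (@itv_open _ _ a b) Ix.
pose r := Num.min r0 (Num.min r1 r2).
have r0' : 0 < r by rewrite !lt_min r00 r10 r20.
pose s := r / 2.
have s0 : 0 < s by rewrite divr_gt0.
have sr : s < r by rewrite /s ltr_pdivrMr // ltr_pMr // ltr1n.
have rr0 : r <= r0 by rewrite ge_min lexx.
have rr1 : r <= r1 by rewrite !ge_min lexx !orbT.
have rr2 : r <= r2 by rewrite !ge_min lexx !orbT.
have inV : forall e', 0 <= e' <= s -> V e'.
  move=> e' /andP[h1 h2]; apply: hr1; rewrite subr0 ger0_norm //.
  by apply: le_lt_trans h2 _; apply: lt_le_trans sr rr1.
have inI : forall y, x <= y <= x + s -> `]a, b[%classic y.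
  move=> y /andP[h1 h2]; apply: hr2; rewrite ger0_norm ?subr_ge0 //.
  by rewrite ltrBlDl; apply: le_lt_trans h2 _; rewrite ltrD2l; apply: lt_le_trans sr rr2.
have inb : forall e' y, `|e'| <= s -> `|y - x| <= s -> V e' -> `[a, b]%classic y ->
    `|dXE e' y - dXE 0 x| <= e / 2 /\ `|dEX e' y - dEX 0 x| <= e / 2.
  move=> e' y he hy Ve Iy.
  have hb : ball ((0:R), x) r0 (e', y).
    split; rewrite /ball /=.
      by rewrite sub0r normrN; apply: le_lt_trans he _; apply: lt_le_trans sr rr0.
    by rewrite distrC; apply: le_lt_trans hy _; apply: lt_le_trans sr rr0.
  have [h1 h2] := hr0 (e', y) hb.
  by split; [apply: h1|apply: h2]; split.
have Vs : V s by apply: inV; rewrite ltW //= lexx.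
have sub1 : `[x, x + s]%classic `<=` `]a, b[%classic.
  by move=> y; rewrite /= in_itv /= => hy; apply: inI.
have sub2 : `[0, s]%classic `<=` V.
  by move=> y; rewrite /= in_itv /= => hy; apply: inV.
have xs : x < x + s by rewrite ltrDl.
have D1 : forall y, `]a, b[%classic y -> is_derive y 1 (fun y => p s y - p 0 y) (dX s y - dX 0 y).
  by move=> y Iy; apply: is_deriveB; [exact: hX|exact: hX].
have := @mvt_pos (fun y => p s y - p 0 y) (fun y => dX s y - dX 0 y)
   `]a, b[%classic x (x + s) xs sub1 D1.
case=> eta h_eta E1.
have Ieta : `]a, b[%classic eta by apply: sub1; move: h_eta; rewrite /= !in_itv /= => /andP[/ltW -> /ltW ->].
have [xi h_xi E2] := @mvt_pos (fun e' => dX e' eta) (fun e' => dEX e' eta) V 0 s s0 sub2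
   (fun e' Ve => hEX e' eta Ve (Isub _ Ieta)).
have Ixs : `]a, b[%classic (x + s) by apply: inI; rewrite lexx ltW.
have D3 : forall e', V e' -> is_derive e' 1 (fun e' => p e' (x + s) - p e' x)
   (dE e' (x + s) - dE e' x).
  by move=> e' Ve; apply: is_deriveB; apply: hE => //; apply: Isub.
have [xi' h_xi' E3] := @mvt_pos (fun e' => p e' (x + s) - p e' x)
   (fun e' => dE e' (x + s) - dE e' x) V 0 s s0 sub2 D3.
have Vxi' : V xi' by apply: sub2; move: h_xi'; rewrite /= !in_itv /= => /andP[/ltW -> /ltW ->].
have [eta' h_eta' E4] := @mvt_pos (dE xi') (dXE xi') `]a, b[%classic x (x + s) xs sub1
   (fun y Iy => hXE xi' y Vxi' Iy).
have Deq : dEX xi eta * s * s = dXE xi' eta' * s * s.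
  have A1 : (p s (x + s) - p 0 (x + s)) - (p s x - p 0 x) = dEX xi eta * s * s.
    by rewrite E1 E2 subr0 addrAC subrr add0r.
  have A2 : (p s (x + s) - p s x) - (p 0 (x + s) - p 0 x) = dXE xi' eta' * s * s.
    by rewrite E3 E4 subr0 addrAC subrr add0r.
  rewrite -A1 -A2; ring.
have s0' : s != 0 by rewrite gt_eqF.
move: Deq => /(mulIf s0') /(mulIf s0') Deq.
have [hxi1 hxi2] : 0 < xi /\ xi < s by move: h_xi; rewrite /= in_itv /= => /andP[].
have [heta1 heta2] : x < eta /\ eta < x + s by move: h_eta; rewrite /= in_itv /= => /andP[].
have [hxi'1 hxi'2] : 0 < xi' /\ xi' < s by move: h_xi'; rewrite /= in_itv /= => /andP[].
have [heta'1 heta'2] : x < eta' /\ eta' < x + s by move: h_eta'; rewrite /= in_itv /= => /andP[].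
have Veta' : `]a, b[%classic eta' by apply: inI; rewrite !ltW.
have hx1 : `|xi| <= s by rewrite gtr0_norm //; exact: ltW hxi2.
have hx2 : `|eta - x| <= s.
  by rewrite gtr0_norm ?subr_gt0 // lerBlDl; exact: ltW heta2.
have hx3 : `|xi'| <= s by rewrite gtr0_norm //; exact: ltW hxi'2.
have hx4 : `|eta' - x| <= s by rewrite gtr0_norm ?subr_gt0 // lerBlDl; exact: ltW heta'2.
have Vxi : V xi by apply: inV; rewrite !ltW.
have [_ B1] := inb xi eta hx1 hx2 Vxi (Isub _ Ieta).
have [B2 _] := inb xi' eta' hx3 hx4 Vxi' (Isub _ Veta').
rewrite Deq in B1.
rewrite -(subrK (dXE xi' eta') (dXE 0 x)) -addrA.
apply: le_trans (ler_normD _ _) _; rewrite (splitr e) lerD //.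
by rewrite distrC.
Qed.

End H4.

Section H5.
Variable R : realType.

Lemma nneseries_cvg (u : nat -> R) : cvgn (series u) ->
  (\sum_(n <oo) (u n)%:E)%E = (limn (series u))%:E.
Proof.
move=> cu; rewrite -EFin_lim //.
have -> : (fun n => (\sum_(0 <= k < n) (u k)%:E)%E) = EFin \o series u.
  by apply/funext => n /=; rewrite /series /= sumEFin.
by [].
Qed.

Lemma lim_series_fine (u : nat -> R) : (forall n, 0 <= u n) ->
  limn (series u) = fine (\sum_(n <oo) (u n)%:E)%E.
Proof.
move=> u0; have [cu|ncu] := pselect (cvgn (series u)).
  by rewrite nneseries_cvg.
rewrite lim_ncvg //.
have [/fin_numP[h1 h2]|] := boolP ((\sum_(n <oo) (u n)%:E)%E \is a fin_num); last first.
  move: (@nneseries_ge0 R (fun n => (u n)%:E) xpredT 0 (fun n _ _ => u0 n)).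
  case: (\sum_(n <oo) (u n)%:E)%E => //.
exfalso; apply: ncu; apply: nondecreasing_is_cvgn.
  by apply/nondecreasing_seqP => n; rewrite seriesSr lerDl.
exists (fine (\sum_(n <oo) (u n)%:E)%E) => _ [n _ <-].
rewrite -lee_fin fineK ?fin_numE ?h1 ?h2 //.
have := @nneseries_lim_ge R (fun n => (u n)%:E) xpredT 0 n (fun n _ _ => u0 n).
by rewrite /series /= sumEFin.
Qed.

Context {d : measure_display} {Omega : measurableType d}.

Lemma stepA (P : probability Omega R) (Z : set nat) (f : nat -> Omega -> R) (B : nat -> R) :
  (forall z w, Z z -> 0 <= f z w) ->
  (forall z, Z z -> P.-integrable setT (fun w => (f z w)%:E)) ->
  (forall z, Z z -> `|Rintegral P setT (f z)| <= B z) ->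
  summableZ Z B ->
  Rintegral P setT (fun w => sumZ Z (fun z => f z w)) =
  sumZ Z (fun z => Rintegral P setT (f z)).
Proof.
move=> f0 fi fB sB.
pose t n w := mk Z (fun z => f z w) n.
have t0 n w : 0 <= t n w by rewrite /t /mk; case: ifPn => // /set_mem; exact: f0.
have mt n : measurable_fun setT (fun w => (t n w)%:E).
  rewrite /t /mk; case: (boolP (n \in Z)) => [/set_mem Zn|_]; last exact: measurable_cst.
  by have /integrableP[] := fi n Zn.
pose Nw w := (\sum_(n <oo) (t n w)%:E)%E.
have E1 : (fun w => sumZ Z (fun z => f z w)) = (fun w => fine (Nw w)).
  by apply/funext => w; rewrite sumZE -lim_series_fine.
have mN : measurable_fun setT Nw.
  have := @ge0_emeasurable_sum _ _ _ setT (fun n w => (t n w)%:E) xpredT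
    (fun n w _ _ => t0 n w) (fun n _ => mt n).
  by [].
have N0 w : (0 <= Nw w)%E by apply: nneseries_ge0 => n _ _; rewrite lee_fin.
have E2 : (\int[P]_w Nw w)%E = (sumZ Z (fun z => Rintegral P setT (f z)))%:E.
  rewrite integral_nneseries //; last by move=> n w _; rewrite lee_fin.
  rewrite sumZE -nneseries_cvg; last first.
    by apply: (mtest (M := B)) => // z Zz; exact: fB.
  apply: eq_eseriesr => i _.
  rewrite /t /mk; case: ifPn => [/set_mem Zi|_]; last by rewrite integral0.
  rewrite /Rintegral fineK //.
  by have /(integrable_fin_num measurableT) := fi i Zi.
have iN : P.-integrable setT Nw.
  apply/integrableP; split => //.
  under eq_integral do rewrite gee0_abs //.
  by rewrite E2 ltry.
have ae : ae_eq P setT (fun w => (fine (Nw w))%:E) Nw.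
  have := integrable_ae measurableT iN; apply: filterS => w h _.
  by rewrite fineK // h.
rewrite E1 /Rintegral (ae_eq_integral Nw) //; first by rewrite E2.
apply/measurable_EFinP; exact: measurableT_comp.
Qed.

End H5.

Section H6.
Variable R : realType.

Lemma eq_sumZ (Z : set nat) (u v : nat -> R) : (forall z, Z z -> u z = v z) ->
  sumZ Z u = sumZ Z v.
Proof.
move=> uv; rewrite !sumZE; congr (limn (series _)); apply/funext => n.
by rewrite /mk; case: ifPn => // /set_mem /uv.
Qed.

Lemma map_into (f : R -> R) (a b c e : R) : a < b ->
  {within `[a, b]%classic, continuous f} ->
  f @` `]a, b[%classic = `]c, e[%classic -> `]c, e[%classic `<=` `[a, b]%classic ->
  forall x, `[a, b]%classic x -> `[a, b]%classic (f x).
Proof.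
move=> ab cf fim sub.
have inner y : `]a, b[%classic y -> `[a, b]%classic (f y).
  by move=> hy; apply: sub; rewrite -fim; exists y.
have [_ ca cb] := (continuous_within_itvP f ab).1 cf.
move=> x; rewrite /= in_itv /= => /andP[ax xb].
have [->|xa] := eqVneq x a.
  apply: (closed_cvg _ (@itv_closed _ _ a b) _ _ ca).
  near=> y; apply: inner; rewrite /= in_itv /=; apply/andP; split.
    by near: y; exact: nbhs_right_gt.
  by near: y; exact: nbhs_right_lt.
have [->|xb'] := eqVneq x b.
  apply: (closed_cvg _ (@itv_closed _ _ a b) _ _ cb).
  near=> y; apply: inner; rewrite /= in_itv /=; apply/andP; split.
    by near: y; exact: nbhs_left_gt.
  by near: y; exact: nbhs_left_lt.
apply: inner; rewrite /= in_itv /= !lt_neqAle ax xb.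
by rewrite eq_sym xa xb'.
Unshelve. all: by end_near.
Qed.

Lemma C1norm_bound (f : R -> R) (a b e : R) : a < b ->
  (forall x, `[a, b]%classic x -> `|f x| <= e) ->
  (forall x, `]a, b[%classic x -> `|derive1 f x| <= e) ->
  0 <= C1norm a b f <= e + e.
Proof.
move=> ab h1 h2; rewrite /C1norm.
set A := [set `|f x| | x in `[a, b]%classic].
set B := [set `|derive1 f x| | x in `]a, b[%classic].
have Aa : A `|f a| by exists a => //; rewrite /= in_itv /= lexx (ltW ab).
have mab : `]a, b[%classic ((a + b) / 2).
  by rewrite /= in_itv /=; have [-> ->] := midf_lt ab.
have Bm : B `|derive1 f ((a + b) / 2)| by exists ((a + b) / 2).
have ubA : ubound A e by move=> y [x hx <-]; exact: h1.
have ubB : ubound B e by move=> y [x hx <-]; exact: h2.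
have hA : has_ubound A by exists e.
have hB : has_ubound B by exists e.
apply/andP; split.
  apply: addr_ge0.
    exact: le_trans (normr_ge0 _) (ub_le_sup hA Aa).
  exact: le_trans (normr_ge0 _) (ub_le_sup hB Bm).
by apply: lerD; apply: ge_sup => //; [exists `|f a| | exists `|derive1 f ((a + b) / 2)|].
Qed.

Lemma slice_cont (V I : set R) (f : R -> R -> R) e0 :
  {within V `*` I, continuous (fun p => f p.1 p.2)} -> V e0 ->
  {within I, continuous (f e0)}.
Proof.
move=> cf Ve; apply: near_within => x Ix e e_gt0.
have := within_near cf (_ : (V `*` I) (e0, x)) e_gt0.
move=> /(_ (conj Ve Ix)); case=> -[A1 B1] /= [nA1 nB1] sub.
apply: filterS nB1 => y B1y Iy.
exact: (sub (e0, y) (conj (nbhs_singleton nA1) B1y) (conj Ve Iy)).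
Qed.

Lemma unif_quot (V I : set R) (Z : set nat) (F G : nat -> R -> R -> R) (M : nat -> R) :
  open V -> V 0 -> compact I -> summableZ Z M -> (forall z, Z z -> 0 <= M z) ->
  (forall z e x, Z z -> V e -> I x -> is_derive e 1 (fun e' => F z e' x) (G z e x)) ->
  (forall z e x, Z z -> V e -> I x -> `|G z e x| <= M z) ->
  (forall z, Z z -> {within V `*` I, continuous (fun p => G z p.1 p.2)}) ->
  forall eta, 0 < eta -> \forall eps \near (0:R)^', forall x, I x ->
    `|sumZ Z (fun z => (F z eps x - F z 0 x) / eps - G z 0 x)| <= eta.
Proof.
move=> oV V0 cI sM M0 hd hb hc eta eta0.
have [r1 r10 hr1] := open_ball_in oV V0.
have MVTq : forall eps z x, Z z -> I x -> eps != 0 -> `|eps| < r1 ->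
    exists c, `|c| <= `|eps| /\ V c /\
      (F z eps x - F z 0 x) / eps - G z 0 x = G z c x - G z 0 x.
  move=> eps z x Zz Ix e0 er.
  have hU : forall y, `|y - 0| <= `|eps - 0| -> V y.
    by move=> y; rewrite !subr0 => hy; apply: hr1; rewrite subr0; exact: le_lt_trans hy er.
  have hD : forall y, V y -> is_derive y 1 (fun e' => F z e' x) (G z y x).
    by move=> y Vy; exact: hd.
  have e0' : (0:R) != eps by rewrite eq_sym.
  have [c [hcc E]] := mvt_sym e0' hU hD.
  rewrite !subr0 in hcc E; exists c; split => //; split; first by apply: hU; rewrite !subr0.
  by rewrite E mulfK.
have h1 : \forall eps \near (0:R)^', forall z x, Z z -> I x ->
    `|(F z eps x - F z 0 x) / eps - G z 0 x| <= M z + M z.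
  have := near0' r10; apply: filterS => eps [e0 er] z x Zz Ix.
  have [c [hcc [Vc ->]]] := MVTq eps z x Zz Ix e0 er.
  by apply: le_trans (ler_normB _ _) _; apply: lerD; apply: hb.
have h2 : forall z, Z z -> forall e1, 0 < e1 -> \forall eps \near (0:R)^', forall x, I x ->
    `|(F z eps x - F z 0 x) / eps - G z 0 x| <= e1.
  move=> z Zz e1 e10.
  have [r2 r20 hr2] := (nbhs_ballP _ _).1 (unif_cont oV V0 cI (hc z Zz) e10).
  have rr : 0 < Num.min r1 r2 by rewrite lt_min r10 r20.
  have := near0' rr; apply: filterS => eps [e0 er] x Ix.
  have er1 : `|eps| < r1 by apply: lt_le_trans er _; rewrite ge_min lexx.
  have er2 : `|eps| < r2 by apply: lt_le_trans er _; rewrite ge_min lexx orbT.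
  have [c [hcc [Vc ->]]] := MVTq eps z x Zz Ix e0 er1.
  apply: (hr2 c) => //; rewrite /ball /= sub0r normrN; exact: le_lt_trans hcc er2.
exact: (tannery (summable2 sM) (fun z Zz => addr_ge0 (M0 z Zz) (M0 z Zz)) h1 h2 eta0).
Qed.

End H6.

Unset Implicit Arguments. Set Strict Implicit.

Theorem lemma2p4
  (R : realType) (a b : R) (d : measure_display) (Omega : measurableType d)
  (Z : set nat)
  (T : Omega -> R -> R)                 (* the maps T_omega *)
  (c e : nat -> Omega -> R)             (* branch domain I_{z,w} = ]c z w, e z w[ *)
  (g g1 : nat -> Omega -> R -> R)       (* inverse branches g_{z,w} and their derivatives *)
  (V : set R) (P : R -> probability Omega R)
  (h : R -> R -> R)                     (* stationary densities h_eps *)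
  (* ---- setting ---- *)
  (hab : a < b)
  (hV : open V) (hV0 : V 0)
  (hI : forall w z, Z z -> c z w < e z w /\ `]c z w, e z w[%classic `<=` `[a, b]%classic)
  (hdisj : forall w z z', Z z -> Z z' -> z <> z' ->
     `]c z w, e z w[%classic `&` `]c z' w, e z' w[%classic = set0)
  (hcover : forall w, lebesgue_measure
     (`[a, b]%classic `\` \bigcup_(z in Z) `]c z w, e z w[%classic) = 0%E)
  (hTC3 : forall w z, Z z -> Ck_on `]c z w, e z w[%classic 3 (T w))
  (hgC3 : forall w z, Z z -> exists fs, fs 0%N = g z w /\ fs 1%N = g1 z w /\
     Ck_fam `[a, b]%classic 3 fs)
  (hgonto : forall w z, Z z -> g z w @` `]a, b[%classic = `]c z w, e z w[%classic)
  (hTg : forall w z x, Z z -> `]a, b[%classic x -> T w (g z w x) = x)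
  (hgT : forall w z y, Z z -> `]c z w, e z w[%classic y -> g z w (T w y) = y)
  (hgmeas : forall z x, Z z -> measurable_fun setT (fun w => g z w x))
  (hg1meas : forall z x, Z z -> measurable_fun setT (fun w => g1 z w x))
  (* ---- (B) ---- *)
  (hB_C1 : forall eps phi, V eps -> Ck_on `[a, b]%classic 1 phi ->
     Ck_on `[a, b]%classic 1 (Lop (P eps) Z g g1 phi))
  (hB_gap : exists (theta C : R), 0 < theta < 1 /\ 0 < C /\
     forall eps phi n, V eps -> Ck_on `[a, b]%classic 1 phi ->
       (\int[lebesgue_measure]_(x in `[a, b]%classic) phi x) / (b - a) = 0 ->
       C1norm a b (iter n (Lop (P eps) Z g g1) phi) <= C * theta ^+ n * C1norm a b phi)
  (hB_h : forall eps, V eps ->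
     [/\ Ck_on `[a, b]%classic 2 (h eps),
         (forall x, `[a, b]%classic x -> Lop (P eps) Z g g1 (h eps) x = h eps x),
         (forall x, `[a, b]%classic x -> 0 <= h eps x),
         (\int[lebesgue_measure]_(x in `[a, b]%classic) h eps x) / (b - a) = 1 &
         forall h' : R -> R,
           lebesgue_measure.-integrable `[a, b]%classic (EFin \o h') ->
           (forall x, `[a, b]%classic x -> 0 <= h' x) ->
           (\int[lebesgue_measure]_(x in `[a, b]%classic) h' x) / (b - a) = 1 ->
           {ae lebesgue_measure, forall x, `[a, b]%classic x ->
              Lop (P eps) Z g g1 h' x = h' x} ->
           {ae lebesgue_measure, forall x, `[a, b]%classic x -> h' x = h eps x}])
  (* ---- (B1) for Phi = h_0 ---- *)
  (hB1 : exists (dE dX dXE dEX : nat -> R -> R -> R) (M0 M1 : nat -> R),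
     (forall z, Z z ->
       [/\ (forall eps x, V eps -> `[a, b]%classic x ->
             is_derive eps 1 (fun eps' => psi P g g1 (h 0) z eps' x) (dE z eps x)),
           (forall eps x, V eps -> `]a, b[%classic x ->
             is_derive x 1 (psi P g g1 (h 0) z eps) (dX z eps x)),
           (forall eps x, V eps -> `]a, b[%classic x ->
             is_derive x 1 (dE z eps) (dXE z eps x)),
           (forall eps x, V eps -> `[a, b]%classic x ->
             is_derive eps 1 (fun eps' => dX z eps' x) (dEX z eps x)) &
           [/\ {within V `*` `[a, b]%classic, continuous (fun p => dE z p.1 p.2)},
               {within V `*` `[a, b]%classic, continuous (fun p => dX z p.1 p.2)},
               {within V `*` `[a, b]%classic, continuous (fun p => dXE z p.1 p.2)},
               {within V `*` `[a, b]%classic, continuous (fun p => dEX z p.1 p.2)} &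
               (forall eps x, V eps -> `[a, b]%classic x ->
                  `|dE z eps x| <= M0 z /\ `|dEX z eps x| <= M1 z)]]) /\
     summableZ Z M0 /\ summableZ Z M1)
  (* ---- (B2) ---- *)
  (hB2 : forall Phi, Ck_on `[a, b]%classic 1 Phi ->
     exists (dX : nat -> R -> R -> R) (M0 M1 : nat -> R),
     (forall z, Z z ->
       [/\ (forall eps x, V eps -> `[a, b]%classic x ->
             (P eps).-integrable setT
               (fun w => (Phi (g z w x) * `|g1 z w x|)%:E)),
           (forall eps x, V eps -> `]a, b[%classic x ->
             is_derive x 1 (psi P g g1 Phi z eps) (dX z eps x)),
           {within V `*` `[a, b]%classic, continuous (fun p => psi P g g1 Phi z p.1 p.2)},
           {within V `*` `[a, b]%classic, continuous (fun p => dX z p.1 p.2)} &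
           (forall eps x, V eps -> `[a, b]%classic x ->
              `|psi P g g1 Phi z eps x| <= M0 z /\ `|dX z eps x| <= M1 z)]) /\
     summableZ Z M0 /\ summableZ Z M1) :
  (* ---- conclusion: eps |-> L_{P_eps} h_0 is differentiable at 0 in C^1 ---- *)
  exists D : R -> R,
    Ck_on `[a, b]%classic 1 D /\
    (\forall eps \near 0, Ck_on `[a, b]%classic 1 (Lop (P eps) Z g g1 (h 0))) /\
    (fun eps => C1norm a b (fun x =>
        (Lop (P eps) Z g g1 (h 0) x - Lop (P 0) Z g g1 (h 0) x) / eps - D x))
      @ 0^' --> 0.
Proof.
have [hC2 _ h0ge _ _] := hB_h 0 hV0.
have hC1 : Ck_on `[a, b]%classic 1 (h 0).
  case: hC2 => fs [fs0 [fc fd]]; exists fs; split => //; split.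
    by move=> i hi; apply: fc; exact: leq_trans hi _.
  by move=> i hi; apply: fd; exact: leq_trans hi _.
have [dX2 [N0 [N1 [hB2z [sN0 sN1]]]]] := hB2 (h 0) hC1.
have [dE [dX [dXE [dEX [M0 [M1 [hB1z [sM0 sM1]]]]]]]] := hB1.
have Isub : `]a, b[%classic `<=` `[a, b]%classic by apply: subset_itvW.
have aI : `[a, b]%classic a by rewrite /= in_itv /= lexx (ltW hab).
have gI : forall w z x, Z z -> `[a, b]%classic x -> `[a, b]%classic (g z w x).
  move=> w z x Zz Ix.
  have [fs [fs0 [_ [fc _]]]] := hgC3 w z Zz.
  have cg : {within `[a, b]%classic, continuous (g z w)} by rewrite -fs0; exact: fc.
  exact: (map_into hab cg (hgonto w z Zz) (hI w z Zz).2).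
have LopE : forall eps x, V eps -> `[a, b]%classic x ->
    Lop (P eps) Z g g1 (h 0) x = sumZ Z (fun z => psi P g g1 (h 0) z eps x).
  move=> eps x Veps Ix; rewrite /Lop.
  apply: (stepA (B := N0)) => //.
  - move=> z w Zz; apply: mulr_ge0 => //; apply: h0ge; exact: gI.
  - by move=> z Zz; have [H1 _ _ _ _] := hB2z z Zz; exact: H1.
  - by move=> z Zz; have [_ _ _ _ H5] := hB2z z Zz; exact: (H5 eps x Veps Ix).1.
have M0ge : forall z, Z z -> 0 <= M0 z.
  move=> z Zz; have [_ _ _ _ [_ _ _ _ H5]] := hB1z z Zz.
  exact: le_trans (normr_ge0 _) (H5 0 a hV0 aI).1.
have M1ge : forall z, Z z -> 0 <= M1 z.
  move=> z Zz; have [_ _ _ _ [_ _ _ _ H5]] := hB1z z Zz.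
  exact: le_trans (normr_ge0 _) (H5 0 a hV0 aI).2.
have dXeq : forall z eps x, Z z -> V eps -> `]a, b[%classic x -> dX2 z eps x = dX z eps x.
  move=> z eps x Zz Veps Ix.
  have [_ H2 _ _ _] := hB2z z Zz; have [_ H2' _ _ _] := hB1z z Zz.
  have E1 := @derive_val _ _ _ _ _ _ _ (H2 eps x Veps Ix).
  have E2 := @derive_val _ _ _ _ _ _ _ (H2' eps x Veps Ix).
  by rewrite -E1 -E2.
have nIo : forall x, `]a, b[%classic x -> \forall y \near x, `]a, b[%classic y.
  by move=> x Ix; apply: open_nbhs_nbhs; split => //; exact: itv_open.
have derivLop : forall eps x, V eps -> `]a, b[%classic x ->
    is_derive x 1 (Lop (P eps) Z g g1 (h 0)) (sumZ Z (fun z => dX z eps x)).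
  move=> eps x Veps Ix.
  have b0 : forall z y, Z z -> `[a, b]%classic y -> `|psi P g g1 (h 0) z eps y| <= N0 z.
    by move=> z y Zz Iy; have [_ _ _ _ H5] := hB2z z Zz; exact: (H5 eps y Veps Iy).1.
  have hd : forall z y, Z z -> `]a, b[%classic y ->
      is_derive y 1 (fun y => psi P g g1 (h 0) z eps y) (dX2 z eps y).
    by move=> z y Zz Iy; have [_ H2 _ _ _] := hB2z z Zz; exact: H2.
  have b1 : forall z y, Z z -> `]a, b[%classic y -> `|dX2 z eps y| <= N1 z.
    by move=> z y Zz Iy; have [_ _ _ _ H5] := hB2z z Zz; exact: (H5 eps y Veps (Isub _ Iy)).2.
  have D := der_sum sN0 sN1 b0 hd b1 Ix.
  rewrite (eq_sumZ (fun z Zz => dXeq z eps x Zz Veps Ix)) in D.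
  apply: near_eq_is_derive D; apply: filterS (nIo x Ix) => y Iy.
  by rewrite LopE //; exact: Isub.
have Schw : forall z x, Z z -> `]a, b[%classic x -> dXE z 0 x = dEX z 0 x.
  move=> z x Zz Ix; have [H1 H2 H3 H4 [C1 C2 C3 C4 _]] := hB1z z Zz.
  exact: (schwarz hV hV0 Ix H1 H2 H3 H4 C3 C4).
pose D := fun x => sumZ Z (fun z => dE z 0 x).
pose Hd := fun x => sumZ Z (fun z => dEX z 0 x).
have bdE : forall z e0 x, Z z -> V e0 -> `[a, b]%classic x -> `|dE z e0 x| <= M0 z.
  by move=> z e0 x Zz Ve Ix; have [_ _ _ _ [_ _ _ _ H5]] := hB1z z Zz; exact: (H5 e0 x Ve Ix).1.
have bdEX : forall z e0 x, Z z -> V e0 -> `[a, b]%classic x -> `|dEX z e0 x| <= M1 z.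
  by move=> z e0 x Zz Ve Ix; have [_ _ _ _ [_ _ _ _ H5]] := hB1z z Zz; exact: (H5 e0 x Ve Ix).2.
have cdE : forall z, Z z -> {within V `*` `[a, b]%classic, continuous (fun p => dE z p.1 p.2)}.
  by move=> z Zz; have [_ _ _ _ [C1 _ _ _ _]] := hB1z z Zz.
have cdEX : forall z, Z z -> {within V `*` `[a, b]%classic, continuous (fun p => dEX z p.1 p.2)}.
  by move=> z Zz; have [_ _ _ _ [_ _ _ C4 _]] := hB1z z Zz.
have hDderiv : forall x, `]a, b[%classic x -> is_derive x 1 D (Hd x).
  move=> x Ix.
  have b0 : forall z y, Z z -> `[a, b]%classic y -> `|dE z 0 y| <= M0 z.
    by move=> z y Zz Iy; exact: bdE.
  have hd : forall z y, Z z -> `]a, b[%classic y -> is_derive y 1 (dE z 0) (dEX z 0 y).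
    move=> z y Zz Iy; rewrite -Schw //.
    by have [_ _ H3 _ _] := hB1z z Zz; exact: H3.
  have b1 : forall z y, Z z -> `]a, b[%classic y -> `|dEX z 0 y| <= M1 z.
    by move=> z y Zz Iy; apply: bdEX => //; exact: Isub.
  exact: (der_sum sM0 sM1 b0 hd b1 Ix).
exists D; split.
  exists (fun n => if n is 0 then D else Hd); split => //; split.
    move=> [|[|i]] // _.
      apply: (cont_sum sM0 M0ge) => [z y Zz Iy|z Zz]; first exact: bdE.
      exact: (slice_cont (cdE z Zz) hV0).
    apply: (cont_sum sM1 M1ge) => [z y Zz Iy|z Zz]; first exact: bdEX.
    exact: (slice_cont (cdEX z Zz) hV0).
  move=> [|i] // _ x; rewrite interior_itv_bnd => Ix /=.
  exact: hDderiv.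
split.
  have nV : \forall eps \near 0, V eps by apply: open_nbhs_nbhs; split.
  by apply: filterS nV => eps Veps; exact: hB_C1.
apply/cvgrPdist_le => e1 e10.
have e20 : 0 < e1 / 2 by rewrite divr_gt0.
have hdE : forall z e0 x, Z z -> V e0 -> `[a, b]%classic x ->
    is_derive e0 1 (fun e' => psi P g g1 (h 0) z e' x) (dE z e0 x).
  by move=> z e0 x Zz Ve Ix; have [H1 _ _ _ _] := hB1z z Zz; exact: H1.
have hdEX : forall z e0 x, Z z -> V e0 -> `[a, b]%classic x ->
    is_derive e0 1 (fun e' => dX z e' x) (dEX z e0 x).
  by move=> z e0 x Zz Ve Ix; have [_ _ _ H4 _] := hB1z z Zz; exact: H4.
have U1 := unif_quot (F := fun z e0 x => psi P g g1 (h 0) z e0 x) hV hV0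
  (@segment_compact R a b) sM0 M0ge hdE bdE cdE e20.
have U2 := unif_quot hV hV0 (@segment_compact R a b) sM1 M1ge hdEX bdEX cdEX e20.
have nV : \forall eps \near (0:R)^', V eps /\ eps != 0.
  have nV0 : \forall eps \near (0:R), V eps by apply: open_nbhs_nbhs; split.
  by rewrite /within /=; apply: filterS nV0 => eps Veps ne; split.
near=> eps.
have [Veps eps0] : V eps /\ eps != 0 by near: eps; exact: nV.
have u1 : forall x, `[a, b]%classic x ->
    `|sumZ Z (fun z => (psi P g g1 (h 0) z eps x - psi P g g1 (h 0) z 0 x) / eps - dE z 0 x)|
    <= e1 / 2 by near: eps; exact: U1.
have u2 : forall x, `[a, b]%classic x ->
    `|sumZ Z (fun z => (dX z eps x - dX z 0 x) / eps - dEX z 0 x)| <= e1 / 2.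
  by near: eps; exact: U2.
have cvpsi : forall e0 x, V e0 -> `[a, b]%classic x ->
    cvgn (series (mk Z (fun z => psi P g g1 (h 0) z e0 x))).
  move=> e0 x Ve Ix; apply: (mtest (M := N0)) => // z Zz.
  by have [_ _ _ _ H5] := hB2z z Zz; exact: (H5 e0 x Ve Ix).1.
have cvdE : forall x, `[a, b]%classic x -> cvgn (series (mk Z (fun z => dE z 0 x))).
  by move=> x Ix; apply: (mtest (M := M0)) => // z Zz; exact: bdE.
have cvdEX : forall x, `[a, b]%classic x -> cvgn (series (mk Z (fun z => dEX z 0 x))).
  by move=> x Ix; apply: (mtest (M := M1)) => // z Zz; exact: bdEX.
have cvdX : forall e0 x, V e0 -> `]a, b[%classic x -> cvgn (series (mk Z (fun z => dX z e0 x))).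
  move=> e0 x Ve Ix; apply: (mtest (M := N1)) => // z Zz.
  rewrite -dXeq //; have [_ _ _ _ H5] := hB2z z Zz; exact: (H5 e0 x Ve (Isub _ Ix)).2.
have B1 : forall x, `[a, b]%classic x ->
    `|(Lop (P eps) Z g g1 (h 0) x - Lop (P 0) Z g g1 (h 0) x) / eps - D x| <= e1 / 2.
  move=> x Ix; rewrite !LopE // /D -sumZ_lin; first exact: u1.
  - exact: cvpsi.
  - exact: cvpsi.
  - exact: cvdE.
have B2 : forall x, `]a, b[%classic x ->
    `|derive1 (fun x => (Lop (P eps) Z g g1 (h 0) x - Lop (P 0) Z g g1 (h 0) x) / eps - D x) x|
    <= e1 / 2.
  move=> x Ix.
  have hd := is_deriveB (is_deriveZ (eps^-1) (is_deriveB (derivLop eps x Veps Ix)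
     (derivLop 0 x hV0 Ix))) (hDderiv x Ix).
  have -> : (fun x => (Lop (P eps) Z g g1 (h 0) x - Lop (P 0) Z g g1 (h 0) x) / eps - D x) =
      (eps^-1 \*: (Lop (P eps) Z g g1 (h 0) - Lop (P 0) Z g g1 (h 0))) - D.
    by apply/funext => y /=; rewrite mulrC.
  rewrite derive1E (@derive_val _ _ _ _ _ _ _ hd) /Hd.
  have -> : eps^-1 *: (sumZ Z (fun z => dX z eps x) - sumZ Z (fun z => dX z 0 x)) =
     (sumZ Z (fun z => dX z eps x) - sumZ Z (fun z => dX z 0 x)) / eps.
    by rewrite mulrC.
  rewrite -sumZ_lin; first by apply: u2; exact: Isub.
  - exact: cvdX.
  - exact: cvdX.
  - exact: cvdEX (Isub _ Ix).
have /andP[C0 Cle] := C1norm_bound hab B1 B2.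
by rewrite sub0r normrN ger0_norm // (splitr e1).
Unshelve. all: by end_near.
Qed.
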